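(* Fix a class $k\in\{1,\dots,K\}$ and a test observation $X_i$. Suppose the class-$k$ training feature vectors $X^k_1,\dots,X^k_{n_k}$ and $X_i$ are exchangeable and that $X_i\sim F_k$. Let $C_o(X_i)$ be the oracle MMDCP prediction set at level $\alpha\in(0,1)$. Then $$\mathbb{P}_k\big(k\in C_o(X_i)\big)\ge 1-\alpha .$$
   Context: Labeled training data $\{(Y_i,X_i)\}_{i=1}^n$ with $Y_i\in\{1,\dots,K\}$, $X_i\in\mathbb{R}^p$; $n_k=\#\{i\le n:Y_i=k\}$ and $X^k_1,\dots,X^k_{n_k}$ are the class-$k$ training feature vectors. Test observations are $X_{n+1},\dots,X_{n+m}$. $F_k$ is the class-$k$ feature distribution with mean $\mu_k$ and positive definite covariance $\Sigma_k$. Oracle score: $s_{ok}(x)=\|(\mathrm{diag}(\Sigma_k))^{-1/2}(x-\mu_k)\|_2^2$. Oracle conformal $p$-value: $p^i_{ok}=\big(1+\sum_{l=1}^{n_k}\mathbb{1}\{s_{ok}(X_i)\le s_{ok}(X^k_l)\}\big)/(n_k+1)$. Oracle MMDCP: for each $k$, if $m=1$, the test point is accepted for class $k$ iff $p^i_{ok}>\lfloor (n_k+1)\alpha\rfloor/(n_k+1)$; if $m>1$, the Benjamini–Hochberg adjusted $p$-values $\tilde p^i_{ok}$ of $\{p^i_{ok}\}_{i=n+1}^{n+m}$ are computed (if $p_{(1)}\le\dots\le p_{(m)}$ are the ordered values, the adjusted value of $p_{(j)}$ is $\min\{1,\min_{l\ge j} m\,p_{(l)}/l\}$), and $X_i$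 is accepted for class $k$ iff $\tilde p^i_{ok}>\lfloor (n_k+1)\alpha\rfloor/(n_k+1)$. The prediction set is $C_o(X_i)=\{k: X_i \text{ accepted for class } k\}$. $\mathbb{P}_k$ denotes probability under the joint law of the data when $X_i\sim F_k$. *)

(* Defs.v *)
From HB Require Import structures.
From mathcomp Require Import all_boot all_order all_algebra all_fingroup.
From mathcomp Require Import all_classical all_reals all_analysis.
Set Implicit Arguments. Unset Strict Implicit. Unset Printing Implicit Defensive.
Import Order.TTheory GRing.Theory Num.Theory.
Local Open Scope classical_set_scope.
Local Open Scope ring_scope.

Section MMDCP.
Variable R : realType.

Definition oracle_score (p : nat) (mu : 'rV[R]_p) (Sig : 'M[R]_p)
    (x : 'rV[R]_p) : R :=
  \sum_(j < p) (x ord0 j - mu ord0 j) ^+ 2 / Sig j j.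

Definition conf_pval (n : nat) (s : R) (cal : 'I_n -> R) : R :=
  (1 + #|[set l : 'I_n | s <= cal l]|)%:R / (n.+1)%:R.

(* Benjamini-Hochberg adjusted p-value of pv i:
   if p_(1) <= ... <= p_(m) (here 0-based sorted seq s), the adjusted value of
   p_(j) is min{1, min_{l >= j} m p_(l) / l}. *)
Definition bh_adjusted (m : nat) (pv : 'I_m -> R) (i : 'I_m) : R :=
  let s := sort <=%R [seq pv l | l <- enum 'I_m] in
  let j := index (pv i) s in
  \big[Order.min/1]_(j <= l < m) (m%:R * nth 0 s l / (l.+1)%:R).

Definition threshold (n : nat) (alpha : R) : R :=
  (Num.floor ((n.+1)%:R * alpha))%:~R / (n.+1)%:R.

Definition oracle_pval (p K m : nat) (Om : Type) (nc : 'I_K -> nat)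
    (Xtr : forall c : 'I_K, 'I_(nc c) -> Om -> 'rV[R]_p)
    (Xte : 'I_m -> Om -> 'rV[R]_p)
    (mu : 'I_K -> 'rV[R]_p) (Sig : 'I_K -> 'M[R]_p)
    (c : 'I_K) (w : Om) (l : 'I_m) : R :=
  conf_pval (oracle_score (mu c) (Sig c) (Xte l w))
            (fun j => oracle_score (mu c) (Sig c) (Xtr c j w)).

Definition oracle_MMDCP_set (p K m : nat) (Om : Type) (nc : 'I_K -> nat)
    (Xtr : forall c : 'I_K, 'I_(nc c) -> Om -> 'rV[R]_p)
    (Xte : 'I_m -> Om -> 'rV[R]_p)
    (mu : 'I_K -> 'rV[R]_p) (Sig : 'I_K -> 'M[R]_p)
    (alpha : R) (w : Om) (i : 'I_m) : {set 'I_K} :=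
  [set c : 'I_K |
    if m == 1%N then
      threshold (nc c) alpha < oracle_pval Xtr Xte mu Sig c w i
    else
      threshold (nc c) alpha < bh_adjusted (oracle_pval Xtr Xte mu Sig c w) i].

Definition posdef (p : nat) (S : 'M[R]_p) : Prop :=
  S^T = S /\ forall u : 'rV[R]_p, u != 0 -> 0 < (u *m S *m u^T) 0 0.

Section prob.
Context {d : measure_display} {Om : measurableType d}.
Variable P : probability Om R.

Definition random_vector (p : nat) (X : Om -> 'rV[R]_p) : Prop :=
  forall j : 'I_p, measurable_fun setT (fun w => X w ord0 j).

Definition has_mean_cov (p : nat) (X : Om -> 'rV[R]_p)
    (mu : 'rV[R]_p) (Sig : 'M[R]_p) : Prop :=
  forall j l : 'I_p,
    [/\ P.-integrable setT (fun w => (X w ord0 j)%:E),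
        ('E_P[fun w => X w ord0 j] = (mu ord0 j)%:E)%E,
        P.-integrable setT
          (fun w => ((X w ord0 j - mu ord0 j) * (X w ord0 l - mu ord0 l))%:E) &
        ('E_P[fun w => ((X w ord0 j - mu ord0 j) * (X w ord0 l - mu ord0 l))%R]
           = (Sig j l)%:E)%E].

(* exchangeability of (Z_0,...,Z_{N-1}): the joint law is invariant under every
   permutation of the indices; equality of joint laws is expressed on measurable
   rectangles, which determine the law on the product Borel sigma-algebra. *)
Definition exchangeable (p N : nat) (Z : 'I_N -> Om -> 'rV[R]_p) : Prop :=
  forall (s : {perm 'I_N}) (A : 'I_N -> 'I_p -> set R),
    (forall l j, measurable (A l j)) ->
    P [set w | forall l j, Z (s l) w ord0 j \in A l j]
    = P [set w | forall l j, Z l w ord0 j \in A l j].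

End prob.
End MMDCP.

Definition calib_and_test (R : realType) (p n : nat) (Om : Type)
    (Xk : 'I_n -> Om -> 'rV[R]_p) (Xi : Om -> 'rV[R]_p)
    (l : 'I_n.+1) : Om -> 'rV[R]_p :=
  match (insub (nat_of_ord l) : option 'I_n) with
  | Some j => Xk j
  | None => Xi
  end.

(* Main.v *)
Require Import Defs.
From HB Require Import structures.
From mathcomp Require Import all_boot all_order all_algebra all_fingroup.
From mathcomp Require Import all_classical all_reals all_analysis.
From mathcomp Require Import measurable_realfun.
Import Order.TTheory GRing.Theory Num.Theory.
Local Open Scope classical_set_scope.
Local Open Scope ring_scope.

Record W (R : realType) N p := mkW { unW : 'I_N -> 'rV[R]_p }.
HB.instance Definition _ (R : realType) N p := gen_eqMixin (W R N p).
HB.instance Definition _ (R : realType) N p := gen_choiceMixin (W R N p).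
HB.instance Definition _ (R : realType) N p :=
  isPointed.Build (W R N p) (@mkW R N p (fun _ => 0)).
Arguments mkW {R N p}.
Arguments unW {R N p}.
Section H.
Variable R : realType.

Lemma score_mfun d (T0 : measurableType d) p (mu : 'rV[R]_p) (S : 'M[R]_p)
  (X : T0 -> 'rV[R]_p) :
  (forall j : 'I_p, measurable_fun setT (fun w => X w ord0 j)) ->
  measurable_fun setT (fun w => oracle_score mu S (X w)).
Proof.
move=> mX; rewrite /oracle_score.
apply: measurable_sum => j.
apply: (measurable_funM (f := fun w => (X w ord0 j - mu ord0 j) ^+ 2)
   (g := cst (S j j)^-1)); last exact: measurable_cst.
apply: measurable_funX; apply: measurable_funB => //; exact: measurable_cst.
Qed.

Lemma pattern_meas d (T0 : measurableType d) (I : finType) (g : I -> T0 -> bool)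
  (Q : {ffun I -> bool} -> bool) :
  (forall i, measurable [set w | g i w]) ->
  measurable [set w | Q [ffun i => g i w]].
Proof.
move=> mg.
have -> : [set w | Q [ffun i => g i w]] =
   \bigcup_(b in [set b | Q b]) \bigcap_(i in [set: I]) [set w | g i w = b i].
  apply/seteqP; split => w /=.
    by move=> Qw; exists [ffun i => g i w] => // i _; rewrite ffunE.
  move=> [b Qb H]; suff -> : [ffun i => g i w] = b by [].
  by apply/ffunP => i; rewrite ffunE; apply: H.
apply: fin_bigcup_measurable; first exact: finite_finset.
move=> b _; apply: fin_bigcap_measurable; first exact: finite_finset.
move=> i _; case: (b i).
  by rewrite (_ : [set w | g i w = true] = [set w | g i w]).
rewrite (_ : [set w | g i w = false] = ~` [set w | g i w]); first exact: measurableC.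
by apply/seteqP; split => w /=; case: (g i w).
Qed.

Lemma cmp_meas d (T0 : measurableType d) p (mu : 'rV[R]_p) (S : 'M[R]_p)
  (X Y : T0 -> 'rV[R]_p) :
  (forall j : 'I_p, measurable_fun setT (fun w => X w ord0 j)) ->
  (forall j : 'I_p, measurable_fun setT (fun w => Y w ord0 j)) ->
  measurable [set w | oracle_score mu S (X w) <= oracle_score mu S (Y w)].
Proof.
move=> mX mY; rewrite -[X in measurable X]setTI.
by apply: measurable_fun_le => //; apply: score_mfun.
Qed.
End H.

Definition cnt (R : realType) N (v : 'I_N -> R) (r : 'I_N) : nat :=
  #|[set l | v r <= v l]%SET|.
Arguments cnt {R N}.

Lemma rank_count (R : realType) N (v : 'I_N -> R) (j : nat) :
  leq #|[set r | leq (cnt v r) j]%SET| j.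
Proof.
set A := [set r | _]%SET.
have [->|[r0 Ar0]] := set_0Vmem A; first by rewrite cards0.
have [r Ar minr] := @arg_minP _ _ _ r0 (mem A) v Ar0.
have Ar' : r \in A := Ar.
apply: leq_trans (_ : leq (cnt v r) j); last by move: Ar'; rewrite inE.
rewrite /cnt; apply: subset_leq_card; apply/fintype.subsetP => l Al; rewrite inE; exact: minr.
Qed.

Section Ex.
Context (R : realType) (d : measure_display) (Om : measurableType d)
  (P : probability Om R) (N p : nat).

Definition rects : set (set (W R N p)) :=
  [set X | exists A : 'I_N -> 'I_p -> set R, (forall l j, measurable (A l j)) /\
     X = [set z : W R N p | forall l j, unW z l ord0 j \in A l j]].

Definition pre (Y : 'I_N -> Om -> 'rV[R]_p) (B : set (W R N p)) : set Om :=
  [set w | B (mkW (fun l => Y l w))].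

Lemma pre_rect_meas (Y : 'I_N -> Om -> 'rV[R]_p) (A : 'I_N -> 'I_p -> set R) :
  (forall l j, measurable_fun setT (fun w => Y l w ord0 j)) ->
  (forall l j, measurable (A l j)) ->
  measurable (pre Y [set z : W R N p | forall l j, unW z l ord0 j \in A l j]).
Proof.
move=> mY mA.
have -> : pre Y [set z : W R N p | forall l j, unW z l ord0 j \in A l j] =
  \bigcap_(l in [set: 'I_N]) \bigcap_(j in [set: 'I_p])
     (setT `&` (fun w => Y l w ord0 j) @^-1` A l j).
  apply/seteqP; split => w /=.
    by move=> H l _ j _; split => //; have := H l j; rewrite inE.
  by move=> H l j; rewrite inE; have [] := H l I j I.
apply: fin_bigcap_measurable; first exact: finite_finset.
move=> l _; apply: fin_bigcap_measurable; first exact: finite_finset.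
move=> j _; exact: mY.
Qed.

Lemma exch_pi_lambda (Z : 'I_N -> Om -> 'rV[R]_p) (s : {perm 'I_N}) :
  (forall l j, measurable_fun setT (fun w => Z l w ord0 j)) ->
  exchangeable P Z ->
  forall B, <<s rects >> B ->
    [/\ measurable (pre Z B), measurable (pre (fun l => Z (s l)) B) &
        P (pre (fun l => Z (s l)) B) = P (pre Z B)].
Proof.
move=> mZ exZ.
set H := [set B | [/\ measurable (pre Z B), measurable (pre (fun l => Z (s l)) B) &
        P (pre (fun l => Z (s l)) B) = P (pre Z B)]].
suff : <<s rects >> `<=` H by move=> + B hB => /(_ B hB).
apply: (@lambda_system_subset _ rects _ setT H).
- move=> X Y [A [mA ->]] [A' [mA' ->]].
  exists (fun l j => A l j `&` A' l j); split.
    by move=> l j; apply: measurableI.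
  apply/seteqP; split => z /=.
    by move=> [h1 h2] l j; rewrite in_setI h1 h2.
  by move=> h; split => l j; have := h l j; rewrite in_setI => /andP[].
- apply/dynkin_lambda_system; split.
  + rewrite /H /=; split; [exact: measurableT|exact: measurableT|by []].
  + move=> X [m1 m2 e]; rewrite /H /=; split.
    * exact: (measurableC m1).
    * exact: (measurableC m2).
    * have -> : pre (fun l => Z (s l)) (~` X) = ~` pre (fun l => Z (s l)) X by [].
      have -> : pre Z (~` X) = ~` pre Z X by [].
      by rewrite !probability_setC // e.
  + move=> F tF hF.
    have preU Y : pre Y (\bigcup_k F k) = \bigcup_k pre Y (F k).
      by apply/seteqP; split => w /=.
    have tY Y : trivIset setT (fun k => pre Y (F k)).
      move=> i j _ _ [w [h1 h2]]; apply: (tF i j I I); by exists (mkW (fun l => Y l w)).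
    rewrite /H /=; split.
    * by rewrite preU; apply: bigcupT_measurable => k; have [] := hF k.
    * by rewrite preU; apply: bigcupT_measurable => k; have [] := hF k.
    * rewrite !preU !measure_bigcup //.
      - by apply: eq_eseriesr => k _; have [] := hF k.
      - by move=> k _; have [] := hF k.
      - by move=> k _; have [] := hF k.
- move=> X [A [mA ->]]; rewrite /H /=; split.
  + exact: pre_rect_meas.
  + by apply: pre_rect_meas => // l j; exact: mZ.
  + exact: exZ.
- by [].
Qed.
End Ex.

Section Ex2.
Context (R : realType) (N p : nat).
Local Notation TT := (g_sigma_algebraType (rects R N p)).

Lemma coord_meas (l : 'I_N) (j : 'I_p) :
  measurable_fun setT (fun z : TT => unW z l ord0 j).
Proof.
move=> _ Y mY; rewrite setTI.
apply: sub_sigma_algebra.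
exists (fun l' j' => if (l' == l) && (j' == j) then Y else setT); split.
  by move=> l' j'; case: ifP.
apply/seteqP; split => z /=.
  by move=> Yz l' j'; case: ifP => [/andP[/eqP-> /eqP->]|_]; rewrite inE.
by move=> h; have := h l j; rewrite !eqxx inE.
Qed.

Lemma Bset_meas (mu : 'rV[R]_p) (S : 'M[R]_p) (jj : nat) (r0 : 'I_N) :
  <<s rects R N p >>
    [set z : W R N p | leq (cnt (fun l => oracle_score mu S (unW z l)) r0) jj].
Proof.
pose Q (b : {ffun 'I_N * 'I_N -> bool}) := leq #|[set l | b (r0, l)]%SET| jj.
have -> : [set z : W R N p | leq (cnt (fun l => oracle_score mu S (unW z l)) r0) jj]
  = [set z : TT | Q [ffun ab : 'I_N * 'I_N =>
        oracle_score mu S (unW z ab.1) <= oracle_score mu S (unW z ab.2)]].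
  apply/seteqP; split => z /=; rewrite /Q /cnt;
  by rewrite (@eq_card _ _ [set l | oracle_score mu S (unW z r0) <= oracle_score mu S (unW z l)]%SET) // => l; rewrite !inE ffunE.
apply: (@pattern_meas _ TT ('I_N * 'I_N)%type) => ab.
by apply: cmp_meas => j; apply: coord_meas.
Qed.
End Ex2.

Lemma bh_ge (R : realType) m (pv : 'I_m -> R) (i : 'I_m) :
  (forall l, 0 <= pv l <= 1) -> pv i <= bh_adjusted pv i.
Proof.
move=> h01; rewrite /bh_adjusted.
set s := sort _ _.
have szs : size s = m by rewrite size_sort size_map size_enum_ord.
have ins : pv i \in s by rewrite mem_sort; apply: map_f; rewrite mem_enum.
have jlt : (index (pv i) s < m)%N by rewrite -szs index_mem.
have srt : sorted <=%R s by apply: sort_sorted; exact: le_total.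
have s0 : forall x, x \in s -> 0 <= x.
  by move=> x; rewrite mem_sort => /mapP[l _ ->]; case/andP: (h01 l).
rewrite big_nat_cond.
elim/big_rec: _ => [|l x /andP[/andP[jl lm] _] hx]; first by case/andP: (h01 i).
rewrite le_min hx andbT.
have y_ge : pv i <= nth 0 s l.
  rewrite -{1}(nth_index 0 ins).
  apply: (sorted_leq_nth le_trans lexx) => //; rewrite inE szs //.
have y0 : 0 <= nth 0 s l by apply: s0; rewrite mem_nth // szs.
apply: (le_trans y_ge).
rewrite ler_pdivlMr ?ltr0n // mulrC ler_wpM2r //.
by rewrite ler_nat.
Qed.

Lemma card_split n (P : pred 'I_n.+1) :
  #|[set l | P l]%SET| = (P ord_max + #|[set l : 'I_n | P (widen_ord (leqnSn n) l)]%SET|)%N.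
Proof.
rewrite -!sum1dep_card [in LHS]big_mkcond [in RHS]big_mkcond big_ord_recr /= addnC; congr (_ + _)%N.
Qed.

Lemma cat_widen (R : realType) p n (Om : Type) (Xk : 'I_n -> Om -> 'rV[R]_p) Xi
  (l : 'I_n) : calib_and_test Xk Xi (widen_ord (leqnSn n) l) = Xk l.
Proof.
rewrite /calib_and_test /=; case: insubP => [u _ /= e|]; last by rewrite ltn_ord.
by congr Xk; apply: val_inj.
Qed.

Lemma cat_max (R : realType) p n (Om : Type) (Xk : 'I_n -> Om -> 'rV[R]_p) Xi :
  calib_and_test Xk Xi ord_max = Xi.
Proof.
by rewrite /calib_and_test /=; case: insubP => [u /=|//]; rewrite ltnn.
Qed.

Theorem corollary1 (R : realType) (d : measure_display) (Om : measurableType d)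
    (P : probability Om R) (p K m : nat) (nc : 'I_K -> nat)
    (Xtr : forall c : 'I_K, 'I_(nc c) -> Om -> 'rV[R]_p)
    (Xte : 'I_m -> Om -> 'rV[R]_p)
    (mu : 'I_K -> 'rV[R]_p) (Sig : 'I_K -> 'M[R]_p)
    (alpha : R) (k : 'I_K) (i : 'I_m) :
  0 < alpha < 1 ->
  (forall c, posdef (Sig c)) ->
  (forall c (l : 'I_(nc c)), random_vector (Xtr c l)) ->
  (forall l, random_vector (Xte l)) ->
  (forall c (l : 'I_(nc c)), has_mean_cov P (Xtr c l) (mu c) (Sig c)) ->
  has_mean_cov P (Xte i) (mu k) (Sig k) ->
  exchangeable P (calib_and_test (Xtr k) (Xte i)) ->
  (P [set w | k \in oracle_MMDCP_set Xtr Xte mu Sig alpha w i]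
     >= (1 - alpha)%:E)%E.
Proof.
move=> /andP[a0 a1] _ rvtr rvte _ _ exch.
pose N := (nc k).+1.
pose Z := calib_and_test (Xtr k) (Xte i).
pose sc := oracle_score (mu k) (Sig k).
pose jj := `|Num.floor (N%:R * alpha)|%N.
pose Bs := [set z : W R N p | leq (cnt (fun l => sc (unW z l)) ord_max) jj].
have hZ : forall l j, measurable_fun setT (fun w => Z l w ord0 j).
  move=> l j; rewrite /Z /calib_and_test; case: insubP => [u _ _|_].
    exact: rvtr.
  exact: rvte.
have hE (r : 'I_N) := @exch_pi_lambda R d Om P N p Z (tperm r ord_max) hZ exch Bs (@Bset_meas R N p (mu k) (Sig k) jj ord_max).
pose E' r := [set w | leq (cnt (fun l => sc (Z l w)) r) jj].
have Er_eq r : pre R d Om N p (fun l => Z (tperm r ord_max l)) Bs = E' r.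
  apply/seteqP; split => w; rewrite /Bs /pre /E' /= /cnt tpermR;
  rewrite -(card_preimset _ (@perm_inj _ (tperm r ord_max))); 
  by rewrite (@eq_card _ _ [set l | sc (Z r w) <= sc (Z (tperm r ord_max l) w)]%SET) // => l; rewrite !inE.
have Elast : pre R d Om N p Z Bs = E' ord_max by [].
have mE r : measurable (E' r) by rewrite -Er_eq; case: (hE r).
have PE r : P (E' r) = P (E' ord_max) by rewrite -Er_eq -Elast; case: (hE r).
have sumb : (\sum_(r < N) P (E' r) <= jj%:R%:E)%E.
  have -> : (\sum_(r < N) P (E' r) =
     \int[P]_(w in setT) (\sum_(r < N) \1_(E' r) w)%:E)%E.
    under eq_integral do rewrite -sumEFin.
    rewrite ge0_integral_sum //.
    - by apply: eq_bigr => r _; rewrite integral_indic // setIT.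
    - by move=> r; apply/measurable_EFinP; apply: measurable_indic.
  apply: (@le_trans _ _ (\int[P]_(w in setT) (cst (jj%:R%:E) w))%E); last first.
    rewrite integral_cst // -[X in (_ <= X)%E]mule1 -(probability_setT P); exact: lexx.
  apply: ge0_le_integral => //.
  - by move=> w _; rewrite lee_fin; apply: sumr_ge0 => r _; rewrite indicE.
  - apply/measurable_EFinP; apply: measurable_sum => r; exact: measurable_indic.
  - move=> w _; rewrite lee_fin /=.
    rewrite (eq_bigr (fun r => if leq (cnt (fun l => sc (Z l w)) r) jj then 1 else 0)); last first.
      move=> r _; rewrite indicE /E'; case: ifPn => h; first by rewrite mem_set.
      by rewrite memNset //=; apply/negP.
    rewrite -big_mkcond sumr_const ler_nat.
    have := @rank_count R N (fun l => sc (Z l w)) jj.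
    by rewrite cardsE.
have [q Pq] : exists q, P (E' ord_max) = q%:E.
  by exists (fine (P (E' ord_max))); rewrite fineK // fin_num_measure.
have fl0 : 0 <= Num.floor (N%:R * alpha) by rewrite floor_ge0 mulr_ge0 // ltW.
have flE : Num.floor (N%:R * alpha) = jj%:Z by rewrite /jj gez0_abs.
have jjle : (jj%:R : R) <= N%:R * alpha.
  by have := floor_le (N%:R * alpha); rewrite flE.
have q_le : q <= alpha.
  move: sumb; rewrite (eq_bigr (fun _ => q%:E)); last by move=> r _; rewrite PE Pq.
  rewrite sumEFin lee_fin sumr_const card_ord => h.
  have : q * N%:R <= alpha * N%:R.
    by rewrite mulrC mulr_natl (le_trans h) // mulrC.
  by rewrite ler_pM2r // ltr0n.
have mT : measurable [set w | k \in oracle_MMDCP_set Xtr Xte mu Sig alpha w i].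
  pose pvb (b : {ffun 'I_m * 'I_(nc k) -> bool}) :=
    fun l => ((1 + #|[set j | b (l, j)]%SET|)%:R / N%:R : R).
  pose Q (b : {ffun 'I_m * 'I_(nc k) -> bool}) :=
    if m == 1%N then threshold (nc k) alpha < pvb b i
    else threshold (nc k) alpha < bh_adjusted (pvb b) i.
  have e w : oracle_pval Xtr Xte mu Sig k w =
      pvb [ffun ab : 'I_m * 'I_(nc k) => sc (Xte ab.1 w) <= sc (Xtr k ab.2 w)].
    apply/funext => l; rewrite /oracle_pval /conf_pval /pvb.
    congr (_%:R / _); congr (1 + _)%N; apply: fintype.eq_card => j; rewrite !inE ffunE /=.
    by apply/idP/idP => [/set_mem|h]; [by [] | exact: mem_set].
  have -> : [set w | k \in oracle_MMDCP_set Xtr Xte mu Sig alpha w i] =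
     [set w | Q [ffun ab : 'I_m * 'I_(nc k) => sc (Xte ab.1 w) <= sc (Xtr k ab.2 w)]].
    by apply/seteqP; split => w /=; rewrite inE /Q e.
  apply: (@pattern_meas _ Om _ (fun ab w => sc (Xte ab.1 w) <= sc (Xtr k ab.2 w)) Q).
  by move=> ab; apply: cmp_meas; [exact: rvte | exact: rvtr].
have sub : ~` E' ord_max `<=` [set w | k \in oracle_MMDCP_set Xtr Xte mu Sig alpha w i].
  move=> w /= hw.
  have hc : cnt (fun l => sc (Z l w)) ord_max =
      addn 1 #|[set l : 'I_(nc k) | sc (Xte i w) <= sc (Xtr k l w)]|.
    rewrite /cnt card_split /Z cat_max lexx /=; congr (1 + _)%N.
    apply: fintype.eq_card => l; rewrite !inE cat_widen.
    by apply/idP/idP => [h|/set_mem//]; exact: mem_set.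
  have pv01 l : 0 <= oracle_pval Xtr Xte mu Sig k w l <= 1.
    rewrite /oracle_pval /conf_pval divr_ge0 //= ler_pdivrMr ?ltr0n // mul1r ler_nat ltnS.
    by apply: leq_trans (max_card _) _; rewrite card_ord.
  have pvi : threshold (nc k) alpha < oracle_pval Xtr Xte mu Sig k w i.
    rewrite /threshold /oracle_pval /conf_pval ltr_pM2r ?invr_gt0 ?ltr0n // flE.
    change (jj%:R < (addn 1 #|[set l : 'I_(nc k) | sc (Xte i w) <= sc (Xtr k l w)]|)%:R :> R).
    by rewrite ltr_nat -hc ltnNge; apply/negP.
  rewrite inE; case: ifP => _; first exact: pvi.
  exact: (lt_le_trans pvi (@bh_ge R m _ i pv01)).
apply: (@le_trans _ _ (P (~` E' ord_max))).
  rewrite probability_setC // Pq -EFinB lee_fin.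
  by rewrite lerD2l lerN2.
apply: le_measure => //; rewrite inE //; exact: measurableC.
Qed.
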